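(* Let $(X,d)$, $(\Lambda,d_\Lambda)$ be compact metric spaces, $\tau:\Lambda\times X\to X$ continuous and $q:X\to\mathcal P(\Lambda)$ continuous. Assume: (M1) there is $s>0$ such that $\int_\Lambda|f(\tau(\lambda,x))-f(\tau(\lambda,y))|\,dq_x(\lambda)\le s\,d(x,y)$ for all $x,y\in X$ and all $f\in\mathrm{Lip}_1(X)$; (H2) there is $r\ge0$ with $d(\tau(\lambda_1,x),\tau(\lambda_2,x))\le r\,d_\Lambda(\lambda_1,\lambda_2)$ for all $\lambda_1,\lambda_2\in\Lambda$, $x\in X$; (H3) there is $t\ge0$ with $d_{MK}(q_x,q_y)\le t\,d(x,y)$ for all $x,y\in X$. Then $T_q$ is $(s+r t)$-Lipschitz with respect to $d_{MK}$ on $\mathcal P(X)$.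
   Context: $\mathcal{P}(Y)$ is the set of Borel probability measures on a compact metric space $Y$, with $d_{MK}(\mu,\nu)=\sup_{f\in \mathrm{Lip}_1(Y)}\{\int f\,d\mu-\int f\,d\nu\}$, where $\mathrm{Lip}_1(Y)$ is the set of real $1$-Lipschitz functions on $Y$. The transfer operator is $B_q(f)(x)=\int_\Lambda f(\tau(\lambda,x))\,dq_x(\lambda)$ and the Markov operator $T_q$ on $\mathcal P(X)$ is defined by $\int f\,dT_q(\mu)=\int B_q(f)\,d\mu$ for $f\in C(X)$. *)

(* Defs.v *)
From HB Require Import structures.
From mathcomp Require Import all_boot all_order all_algebra.
From mathcomp Require Import all_classical all_reals all_analysis.
Set Implicit Arguments. Unset Strict Implicit. Unset Printing Implicit Defensive.
Import Order.TTheory GRing.Theory Num.Theory.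
Import numFieldNormedType.Exports.
Local Open Scope classical_set_scope.
Local Open Scope ring_scope.

(* Nonempty (pointed) metric spaces: join of the library's metricType and
   pointedType (measurable types in MathComp-Analysis must be pointed). *)
#[short(type="pmetricType")]
HB.structure Definition PointedMetric (R : numDomainType) :=
  {M of Pointed M & Metric R M}.

Definition borel {R : realType} (X : pmetricType R)
  : measurableType (@open X).-sigma := g_sigma_algebraType (@open X).

Definition Prob {R : realType} (X : pmetricType R) := probability (borel X) R.

Definition Lip1 {R : realType} (X : pmetricType R) : set (X -> R) :=
  [set f | forall x y : X, `|f x - f y| <= mdist x y].
Arguments Lip1 {R} X.

Definition dMK {R : realType} (X : pmetricType R) (mu nu : Prob X) : \bar R :=
  ereal_sup [set (\int[mu]_x (f x)%:E - \int[nu]_x (f x)%:E)%E | f in Lip1 X].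

Definition Bq {R : realType} (X L : pmetricType R) (tau : L -> X -> X)
  (q : X -> Prob L) (f : X -> R) (x : X) : \bar R :=
  (\int[q x]_l (f (tau l x))%:E)%E.

(* Tmu is T_q(mu): \int f dT_q(mu) = \int B_q(f) dmu for all f in C(X). *)
Definition IsTq {R : realType} (X L : pmetricType R) (tau : L -> X -> X)
  (q : X -> Prob L) (mu Tmu : Prob X) : Prop :=
  forall f : X -> R, continuous f ->
    (\int[Tmu]_x (f x)%:E = \int[mu]_x Bq tau q f x)%E.

(* Main.v *)
Require Import Defs.
From HB Require Import structures.
From mathcomp Require Import all_boot all_order all_algebra.
From mathcomp Require Import all_classical all_reals all_analysis.
From mathcomp Require Import measurable_realfun.
From mathcomp Require Import ring lra.
Import Order.TTheory GRing.Theory Num.Theory.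
Import numFieldNormedType.Exports.
Local Open Scope classical_set_scope.
Local Open Scope ring_scope.
Set Implicit Arguments. Unset Strict Implicit. Unset Printing Implicit Defensive.

Section H.
Variable R : realType.

Lemma cont_meas (X : pmetricType R) (f : X -> R) :
  continuous f -> measurable_fun (setT : set (borel X)) f.
Proof.
move=> /continuousP cf; apply: (measurability _ (RGenOpens.measurableE R)).
move=> _ [_ [a [b ->] <-]]; rewrite setTI.
apply: sub_sigma_algebra; apply: cf; exact: interval_open.
Qed.

Lemma cont_bdd (X : pmetricType R) (f : X -> R) :
  compact [set: X] -> continuous f -> [bounded f x | x in [set: X]].
Proof.
move=> cX cf.
have /compact_bounded : compact (f @` [set: X]).
  apply: continuous_compact cX; exact: continuous_subspaceT.
move=> [M [Mr HM]]; exists M; split => // y My x _.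
by apply: (HM y My); exists x.
Qed.

Lemma cont_int (X : pmetricType R) (P : Prob X) (f : X -> R) :
  compact [set: X] -> continuous f -> P.-integrable setT (EFin \o f).
Proof.
move=> cX cf; apply: measurable_bounded_integrable => //.
  by rewrite /= probability_setT ltry.
  exact: cont_meas.
exact: cont_bdd.
Qed.

Lemma lip_cont (X : pmetricType R) (f : X -> R) (k : R) :
  (forall x y, `|f x - f y| <= k * mdist x y) -> continuous f.
Proof.
move=> fk x; apply/cvgrPdist_lt => e e0.
apply/nbhs_ballP; exists (e / (`|k| + 1)).
  by rewrite /= divr_gt0 // ltr_wpDl.
move=> y; rewrite ballEmdist /= => xy.
apply: (le_lt_trans (fk x y)).
apply: (le_lt_trans (y := `|k| * mdist x y)).
  by apply: ler_wpM2r; [exact: mdist_ge0|exact: ler_norm].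
rewrite ltr_pdivlMr ?ltr_wpDl // in xy.
apply: le_lt_trans xy; rewrite mulrC; apply: ler_wpM2l; first exact: mdist_ge0.
by rewrite lerDl.
Qed.

Definition E (Y : pmetricType R) (P : Prob Y) (u : Y -> R) :=
  fine (\int[P]_y (u y)%:E)%E.

Lemma EE (Y : pmetricType R) (P : Prob Y) (u : Y -> R) :
  compact [set: Y] -> continuous u -> ((E P u)%:E = \int[P]_y (u y)%:E)%E.
Proof.
move=> cY cu; rewrite /E fineK //; apply: integrable_fin_num => //.
exact: cont_int.
Qed.

Lemma cB (Y : pmetricType R) (u v : Y -> R) :
  continuous u -> continuous v -> continuous (fun y => u y - v y).
Proof. by move=> cu cv y; exact: (continuousB (cu y) (cv y)). Qed.

Lemma cZ (Y : pmetricType R) (a : R) (u : Y -> R) :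
  continuous u -> continuous (fun y => a * u y).
Proof. move=> cu y; apply: cvgM; [exact: cvg_cst | exact: cu]. Qed.

Lemma EB (Y : pmetricType R) (P : Prob Y) (u v : Y -> R) :
  compact [set: Y] -> continuous u -> continuous v ->
  E P (fun y => u y - v y) = E P u - E P v.
Proof.
move=> cY cu cv; apply: EFin_inj; rewrite EFinB !EE //; last exact: cB.
under eq_integral do rewrite EFinB.
by apply: integralB_EFin => //; exact: cont_int.
Qed.

Lemma EZ (Y : pmetricType R) (P : Prob Y) (a : R) (u : Y -> R) :
  compact [set: Y] -> continuous u ->
  E P (fun y => a * u y) = a * E P u.
Proof.
move=> cY cu; apply: EFin_inj; rewrite EFinM !EE //; last exact: cZ.
under eq_integral do rewrite EFinM.
by apply: integralZl => //; exact: cont_int.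
Qed.

Lemma Ecst (Y : pmetricType R) (P : Prob Y) (a : R) :
  E P (fun _ => a) = a.
Proof.
by rewrite /E (integral_cst P measurableT a%:E) /= probability_setT mule1.
Qed.

Lemma Eabs (Y : pmetricType R) (P : Prob Y) (u : Y -> R) :
  compact [set: Y] -> continuous u ->
  ((E P u)%:E <= \int[P]_y (`|u y|)%:E)%E.
Proof.
move=> cY cu; rewrite EE //; apply: le_trans (lee_abs _) _.
apply: le_abse_integral => //; apply/measurable_EFinP; exact: cont_meas.
Qed.
End H.

Unset Implicit Arguments.
Set Strict Implicit.

Theorem mainTheorem5 (R : realType) (X L : pmetricType R)
  (tau : L -> X -> X) (q : X -> Prob L) (s r t : R) :
  compact [set: X] -> compact [set: L] ->
  continuous (fun p : L * X => tau p.1 p.2) ->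
  (* continuity of q into P(L) with the weak topology *)
  (forall g : L -> R, continuous g ->
     continuous (fun x : X => (\int[q x]_l (g l)%:E)%E)) ->
  (* (M1) *)
  0 < s ->
  (forall (x y : X) (f : X -> R), Lip1 X f ->
     (\int[q x]_l (`|f (tau l x) - f (tau l y)|)%:E <= (s * mdist x y)%:E)%E) ->
  (* (H2) *)
  0 <= r ->
  (forall (l1 l2 : L) (x : X), mdist (tau l1 x) (tau l2 x) <= r * mdist l1 l2) ->
  (* (H3) *)
  0 <= t ->
  (forall x y : X, (dMK (q x) (q y) <= (t * mdist x y)%:E)%E) ->
  (* conclusion: T_q is (s + r t)-Lipschitz for d_MK *)
  forall mu nu Tmu Tnu : Prob X,
    IsTq tau q mu Tmu -> IsTq tau q nu Tnu ->
    (dMK Tmu Tnu <= (s + r * t)%:E * dMK mu nu)%E.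
Proof.
move=> cX cL ctau cq s0 M1 r0 H2 t0 H3 mu nu Tmu Tnu hmu hnu.
have rt0 : 0 <= r * t by apply: mulr_ge0.
have c0 : 0 < s + r * t by lra.
apply: ge_ereal_sup => _ [f Lf <-].
have cf : continuous f.
  by apply: (@lip_cont _ _ _ 1) => a b; rewrite mul1r; exact: Lf.
have ctx : forall x, continuous (fun l => f (tau l x)).
  move=> x; apply: (@lip_cont _ _ _ r) => l1 l2.
  exact: le_trans (Lf _ _) (H2 _ _ _).
pose g x := E (q x) (fun l => f (tau l x)).
have Bg : forall x, Bq tau q f x = (g x)%:E by move=> x; rewrite /g EE.
have key : forall x y, g x - g y <= (s + r * t) * mdist x y.
  move=> x y.
  pose B := E (q x) (fun l => f (tau l y)).
  have h1 : g x - B <= s * mdist x y.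
    rewrite /g /B -EB //; rewrite -lee_fin.
    apply: le_trans (Eabs _ _ _) (M1 x y f Lf) => //.
    exact: cB.
  have h2 : B - g y <= r * t * mdist x y.
    case: (eqVneq r 0) => [r00|rn0].
      have hc : (fun l => f (tau l y)) = (fun _ => f (tau point y)).
        apply/funext => l; apply/eqP; rewrite -subr_eq0 -normr_le0.
        by have := le_trans (Lf _ _) (H2 l point y); rewrite r00 mul0r.
      rewrite /B /g hc !Ecst subrr r00 !mul0r; exact: lexx.
    have rp : 0 < r by rewrite lt_def rn0 r0.
    pose hh l := r^-1 * f (tau l y).
    have Lh : Lip1 L hh.
      move=> l1 l2; rewrite /hh -mulrBr normrM gtr0_norm ?invr_gt0 //.
      rewrite ler_pdivrMl //; exact: le_trans (Lf _ _) (H2 _ _ _).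
    have : (\int[q x]_l (hh l)%:E - \int[q y]_l (hh l)%:E <= dMK (q x) (q y))%E.
      by apply: ereal_sup_ubound; exists hh.
    move/le_trans => /(_ _ (H3 x y)).
    rewrite -!EE //; try exact: cZ.
    rewrite -EFinB lee_fin /hh !EZ //.
    have := mulfV (lt0r_neq0 rp).
    rewrite /B => rr H.
    rewrite /g; rewrite -mulrBr in H; have := ler_wpM2l r0 H.
    by rewrite mulrA rr mul1r mulrA.
  lra.
have gLip : forall x y, `|g x - g y| <= (s + r * t) * mdist x y.
  move=> x y; rewrite ler_norml; apply/andP; split; last exact: key.
  have := key y x; rewrite metric_sym; lra.
pose h x := (s + r * t)^-1 * g x.
have Lh : Lip1 X h.
  move=> x y; rewrite /h -mulrBr normrM gtr0_norm ?invr_gt0 //.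
  by rewrite ler_pdivrMl.
have ch : continuous h.
  by apply: (@lip_cont _ _ _ 1) => a b; rewrite mul1r; exact: Lh.
have gh : g = (fun x => (s + r * t) * h x).
  by apply/funext => x; rewrite /h mulrA mulfV ?mul1r // lt0r_neq0.
rewrite hmu // hnu //.
under eq_integral do rewrite Bg.
under [X in (_ - X)%E]eq_integral do rewrite Bg.
rewrite gh -!EE //; try exact: cZ.
rewrite (EZ mu _ cX ch) (EZ nu _ cX ch) -EFinB -mulrBr EFinM.
apply: lee_wpmul2l; first by rewrite lee_fin ltW.
rewrite EFinB !EE //.
by apply: ereal_sup_ubound; exists h.
Qed.
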